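(* Let $n \ge 2$ and let $\mathcal{A}$ be a non-degenerate deformation of the type $A_{n-1}$ Coxeter arrangement in $\mathbb{R}^n$. Let $H_0 \in \mathcal{A}$, say $H_0 : x_k - x_l = a$ with $k<l$. Then the restriction $\mathcal{A}^{H_0}$, viewed in $\mathbb{R}^{n-1}$ via the isomorphism $H_0 \to \mathbb{R}^{n-1}$ that deletes the coordinate $x_l$, is a non-degenerate deformation of the type $A_{n-2}$ Coxeter arrangement in $\mathbb{R}^{n-1}$.
   Context: A non-degenerate deformation of the type $A_{n-1}$ Coxeter arrangement in $\mathbb{R}^n$ is a finite hyperplane arrangement of the form $\{x_i-x_j = a_{ij}^{(1)},\ldots,a_{ij}^{(t_{ij})}\ |\ 1\le i \ne j \le n\}$ with all $a_{ij}^{(s)}\in\mathbb{R}$ and $t_{ij}\ge 1$, i.e. every hyperplane is parallel to some $x_i-x_j=0$ and for every pair $i\ne j$ there is at least one hyperplane of the form $x_i - x_j = c$. For $H_0 \in \mathcal{A}$, the restriction is the arrangement $\mathcal{A}^{H_0} = \{H_0 \cap H : H \in \mathcal{A}\setminus\{H_0\},\ H_0\cap H \neq \emptyset\}$ in the affine space $H_0$. *)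

(* Defs.v *)
From HB Require Import structures.
From mathcomp Require Import all_boot all_order all_algebra.
From mathcomp Require Import boolp classical_sets cardinality reals.
Set Implicit Arguments. Unset Strict Implicit. Unset Printing Implicit Defensive.
Import Order.TTheory GRing.Theory Num.Theory.
Local Open Scope ring_scope.
Local Open Scope classical_set_scope.

Definition hyp_diff (R : realType) (n : nat) (i j : 'I_n) (c : R)
  : set ('I_n -> R) := [set x | x i - x j = c].

Definition nondeg_deformation_A (R : realType) (n : nat)
  (A : set (set ('I_n -> R))) : Prop :=
  finite_set A /\
  (forall H, A H -> exists (i j : 'I_n) (c : R), i != j /\ H = hyp_diff i j c) /\
  (forall i j : 'I_n, i != j -> exists c : R, A (hyp_diff i j c)).

Definition del_coord (R : realType) (n : nat) (l : 'I_n) (x : 'I_n -> R)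
  : 'I_n.-1 -> R := fun j => x (lift l j).

Definition restriction_del (R : realType) (n : nat)
  (A : set (set ('I_n -> R))) (H0 : set ('I_n -> R)) (l : 'I_n)
  : set (set ('I_n.-1 -> R)) :=
  [set K | exists H, [/\ A H, H <> H0, (H0 `&` H) !=set0 &
                        K = del_coord l @` (H0 `&` H)]].

(* Main.v *)
Require Import Defs.
From HB Require Import structures.
From mathcomp Require Import all_boot all_order all_algebra.
From mathcomp Require Import boolp classical_sets cardinality reals.
From mathcomp Require Import ring lra.
Set Implicit Arguments. Unset Strict Implicit. Unset Printing Implicit Defensive.
Import Order.TTheory GRing.Theory Num.Theory.
Local Open Scope ring_scope.
Local Open Scope classical_set_scope.

Definition secc (R : realType) (n : nat) (l k : 'I_n) (a : R)
  (y : 'I_n.-1 -> R) : 'I_n -> R := fun m =>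
  match unlift l m with
  | Some j => y j
  | None => (match unlift l k with Some j => y j | None => 0 end) - a
  end.

Lemma secc_lift (R : realType) n (l k : 'I_n) (a : R) y j :
  secc l k a y (lift l j) = y j.
Proof. by rewrite /secc liftK. Qed.

Lemma secc_l (R : realType) n (l k : 'I_n) (a : R) y :
  k != l -> secc l k a y l = secc l k a y k - a.
Proof.
move=> kl; case: (unliftP l k) kl => [k' ->|->]; last by rewrite eqxx.
by rewrite /secc unlift_none liftK.
Qed.

Lemma secc_H0 (R : realType) n (l k : 'I_n) (a : R) y :
  k != l -> hyp_diff k l a (secc l k a y).
Proof. move=> kl; rewrite /hyp_diff /= secc_l //; ring. Qed.

Lemma del_secc (R : realType) n (l k : 'I_n) (a : R) y :
  del_coord l (secc l k a y) = y.
Proof. by apply: funext => j; rewrite /del_coord secc_lift. Qed.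

Lemma secc_del (R : realType) n (l k : 'I_n) (a : R) x :
  k != l -> hyp_diff k l a x -> secc l k a (del_coord l x) = x.
Proof.
move=> kl; rewrite /hyp_diff /= => Hx; apply: funext => m.
case: (unliftP l m) => [j ->|->]; first by rewrite secc_lift.
rewrite secc_l //; case: (unliftP l k) kl Hx => [k' ->|->]; last by rewrite eqxx.
move=> _ Hx; rewrite secc_lift /del_coord -Hx; ring.
Qed.

Lemma image_eq (R : realType) n (l k : 'I_n) (a : R) (H : set ('I_n -> R)) :
  k != l ->
  del_coord l @` (hyp_diff k l a `&` H) = [set y | H (secc l k a y)].
Proof.
move=> kl; apply/seteqP; split.
  move=> y [x [H0x Hx] <-] /=; by rewrite secc_del.
move=> y /= Hy; exists (secc l k a y); last exact: del_secc.
by split=> //; apply: secc_H0.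
Qed.

Theorem lemma3p1 (R : realType) (n : nat) (A : set (set ('I_n -> R)))
  (k l : 'I_n) (a : R) :
  (2 <= n)%N ->
  nondeg_deformation_A A ->
  (k < l)%N ->
  A (hyp_diff k l a) ->
  nondeg_deformation_A (restriction_del A (hyp_diff k l a) l).
Proof.
move=> n2 [finA [formA allA]] klt AH0.
have kl : k != l by rewrite neq_ltn klt.
have [k' kk'] : exists k', k = lift l k'.
  by case: (unliftP l k) kl => [k' ->|->]; [exists k'|rewrite eqxx].
split; [|split].
- apply: (sub_finite_set _ (finite_image (fun H => del_coord l @` (hyp_diff k l a `&` H)) finA)).
  by move=> K [H [AH _ _ ->]]; exists H.
- move=> K [H [AH HH0 [x [H0x Hx]] ->]].
  have [i [j [c [ij HE]]]] := formA H AH.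
  rewrite image_eq // HE /hyp_diff /=.
  case: (unliftP l i) ij HE Hx => [i' ->|->];
    case: (unliftP l j) => [j' ->|->] //; rewrite ?eqxx //.
  + move=> ij _ _; exists i', j', c; split.
      by apply: contra ij => /eqP ->.
    by apply/seteqP; split => y /=; rewrite !secc_lift.
  + move=> ij HE Hx; exists i', k', (c - a); split.
      apply/eqP => e; apply: HH0; move: Hx H0x; rewrite HE e -kk' /hyp_diff /=.
      move=> Hx H0x; apply/seteqP; split => z /= Hz; lra.
    apply/seteqP; split => y /=; rewrite secc_lift secc_l // kk' secc_lift; lra.
  + move=> ij HE Hx; exists k', j', (c + a); split.
      apply/eqP => e; apply: HH0; move: Hx H0x; rewrite HE -e -kk' /hyp_diff /=.
      move=> Hx H0x; apply/seteqP; split => z /= Hz; lra.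
    apply/seteqP; split => y /=; rewrite secc_lift secc_l // kk' secc_lift; lra.
- move=> i' j' ij.
  have lij : lift l i' != lift l j' by apply: contra ij => /eqP /lift_inj ->.
  have [c Ac] := allA _ _ lij.
  exists c; exists (hyp_diff (lift l i') (lift l j') c).
  split => //.
  + move=> E.
      pose y : 'I_n.-1 -> R := fun m => if m == i' then c + 1 else 0.
      have := @secc_H0 _ _ l k a y kl; rewrite -E /hyp_diff /= !secc_lift /y eqxx.
      rewrite (negbTE (_ : j' != i')); first lra.
      by rewrite eq_sym.
  + pose y : 'I_n.-1 -> R := fun m => if m == i' then c else 0.
      exists (secc l k a y); split; first by apply: secc_H0.
      rewrite /hyp_diff /= !secc_lift /y eqxx.
      rewrite (negbTE (_ : j' != i')); first lra.
      by rewrite eq_sym.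
  rewrite image_eq //; apply/seteqP; split => y;
      rewrite /hyp_diff /= !secc_lift //.
Qed.
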